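(* Let $k\subset K$ be a finite totally ramified Galois extension of complete discrete valuation fields with Galois group $G$ and degree $n$, and let $i\in\mathbb Z$. Then $p_i$ induces a well-defined $\bar k$-linear isomorphism of $\bar k$-vector spaces $\mathfrak C_i/\mathfrak C_{i+1}\to R=\bar k[X]/(X^n-1)$.
   Context: $O_K$ is the ring of integers of $K$, $\mathfrak m$ its maximal ideal, $\bar k=O_K/\mathfrak m$ the residue field (also the residue field of $k$), $r:O_K\to\bar k$ the reduction, $v$ the valuation of $K$ with $v(K^* )=\mathbb Z$, $\pi$ a fixed uniformizer of $K$, $d=v(\mathfrak D_{K/k})-n+1$ the ramification depth ($\mathfrak D_{K/k}$ the different). The element $c_\pi=\mathrm{Tr}_{K/k}(\pi^{-d})$ is a unit of $O_k$. Elements $f=\sum_\sigma a_\sigma\sigma\in K[G]$ act on $K$ by $f(x)=\sum_\sigma a_\sigma\sigma(x)$. $\mathfrak C_i=\{f\in K[G]:\ v(f(x))-v(x)\ge i\ \forall x\in K^*\}$; it is an $O_K$-module under left multiplication by $K$, so $\mathfrak C_i/\mathfrak C_{i+1}$ is a $\bar k$-vector space. For $f\in\mathfrak C_i$, $p_i(f)=r(c_\pi)^{-1}\sum_{j=0}^{n-1} r\big(f(\pi^{j-i})/\pi^j\big)X^j\in R$. *)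

(* Defs.v *)
From HB Require Import structures.
From mathcomp Require Import all_boot all_order all_algebra all_fingroup all_field.
Set Implicit Arguments. Unset Strict Implicit. Unset Printing Implicit Defensive.
Import Order.TTheory GRing.Theory Num.Theory.
Local Open Scope ring_scope.

Section Defs.
Variables (k : fieldType) (K : splittingFieldType k).

(* v : K -> int is a normalized discrete valuation on K^x (value at 0 irrelevant). *)
Definition is_dvf (v : K -> int) : Prop :=
  [/\ forall x y, x != 0 -> y != 0 -> v (x * y) = v x + v y,
      forall x y, x != 0 -> y != 0 -> x + y != 0 -> Num.min (v x) (v y) <= v (x + y)
    & exists x, x != 0 /\ v x = 1].

(* "v(x) >= m" with the convention v(0) = +oo *)
Definition vge (v : K -> int) (x : K) (m : int) : Prop := x = 0 \/ m <= v x.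

Definition vcauchy (v : K -> int) (u : nat -> K) : Prop :=
  forall N : int, exists M, forall p q, (M <= p)%N -> (M <= q)%N -> vge v (u p - u q) N.
Definition vconv (v : K -> int) (u : nat -> K) (l : K) : Prop :=
  forall N : int, exists M, forall p, (M <= p)%N -> vge v (u p - l) N.
Definition vcomplete (v : K -> int) (S : K -> Prop) : Prop :=
  forall u : nat -> K, (forall p, S (u p)) -> vcauchy v u ->
    exists l, S l /\ vconv v u l.

Definition in_k (x : K) : Prop := x \in (1%VS : {vspace K}).

(* totally ramified: e = [v(K^x) : v(k^x)] = n, i.e. v(k^x) = nZ *)
Definition totally_ramified (v : K -> int) : Prop :=
  (forall x, in_k x -> x != 0 -> ((\dim {:K})%:Z %| v x)%Z) /\
  (exists x, [/\ in_k x, x != 0 & v x = (\dim {:K})%:Z]).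

(* r : O_K -> kbar is the reduction onto the residue field O_K / m *)
Definition residue_map (v : K -> int) (kbar : fieldType) (r : K -> kbar) : Prop :=
  [/\ r 1 = 1,
      forall x y, vge v x 0 -> vge v y 0 -> r (x + y) = r x + r y,
      forall x y, vge v x 0 -> vge v y 0 -> r (x * y) = r x * r y,
      forall c : kbar, exists x, vge v x 0 /\ r x = c
    & forall x, vge v x 0 -> (r x = 0 <-> vge v x 1)].

Definition Trk (x : K) : K := galTrace 1%VS {:K} x.

(* delta = v(D_{K/k}): the codifferent {x | Tr(x O_K) ⊂ O_k} equals pi^(-delta) O_K *)
Definition is_vdiff (v : K -> int) (delta : int) : Prop :=
  forall x, (forall y, vge v y 0 -> vge v (Trk (x * y)) 0) <-> vge v x (- delta).

(* the group ring K[G], G = Gal(K/k), and its action on K *)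
Definition KG := {ffun gal_of {:K} -> K}.
Definition gact (f : KG) (x : K) : K :=
  \sum_(s in ('Gal({:K} / 1%VS))%g) f s * s x.
Definition kscale (a : K) (f : KG) : KG := [ffun s => a * f s].
Definition kadd (f g : KG) : KG := [ffun s => f s + g s].

Definition Cfil (v : K -> int) (i : int) (f : KG) : Prop :=
  forall x, x != 0 -> vge v (gact f x) (v x + i).

Definition p_map (v : K -> int) (kbar : fieldType) (r : K -> kbar) (pi : K)
    (delta i : int) (f : KG) : {poly kbar} :=
  let n := \dim {:K} in
  let d := delta - n%:Z + 1 in
  let c := Trk (pi ^ (- d)) in
  (r c)^-1 *: \sum_(j < n) r (gact f (pi ^ (j%:Z - i)) / pi ^+ j) *: 'X^j.

(* equality in R = kbar[X]/(X^n - 1) *)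
Definition eqR (kbar : fieldType) (q1 q2 : {poly kbar}) : Prop :=
  ('X^(\dim {:K}) - 1 %| q1 - q2)%R.

End Defs.

(* Main.v *)
Require Import Defs.
From HB Require Import structures.
From mathcomp Require Import all_boot all_order all_algebra all_fingroup all_field.
From mathcomp Require Import zify ring.
Import Order.TTheory GRing.Theory Num.Theory.
Local Open Scope ring_scope.

Section Main.
Variables (k : fieldType) (K : splittingFieldType k) (v : K -> int)
  (pi : K) (delta : int).
Hypothesis Hv : is_dvf v.
Hypothesis Hgal : galois 1%VS {:K}.
Hypothesis Htr : totally_ramified v.
Hypothesis pi0 : pi != 0.
Hypothesis vpi : v pi = 1.
Hypothesis Hdiff : is_vdiff v delta.

Local Notation n := (\dim (@fullv k K)).

Lemma vM {x y : K} : x != 0 -> y != 0 -> v (x * y) = v x + v y.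
Proof. by have [h _ _] := Hv; apply: h. Qed.

Lemma vD {x y : K} : x != 0 -> y != 0 -> x + y != 0 -> Num.min (v x) (v y) <= v (x + y).
Proof. by have [_ h _] := Hv; apply: h. Qed.

Lemma v1 : v 1 = 0.
Proof. have := vM (oner_neq0 K) (oner_neq0 K); rewrite mulr1 => h. by apply: (addrI (v 1)); rewrite addr0 -h. Qed.

Lemma vN1 : v (-1) = 0.
Proof.
have n1 : (-1 : K) != 0 by rewrite oppr_eq0 oner_neq0.
have := vM n1 n1; rewrite mulrNN mulr1 v1 => h; lia.
Qed.

Lemma vN x : v (- x) = v x.
Proof.
have [->|x0] := eqVneq x 0; first by rewrite oppr0.
have n1 : (-1 : K) != 0 by rewrite oppr_eq0 oner_neq0.
by rewrite -mulN1r vM // vN1 add0r.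
Qed.

Lemma vV x : x != 0 -> v x^-1 = - v x.
Proof.
move=> x0; have := vM x0 (invr_neq0 x0); rewrite mulfV // v1 => h; lia.
Qed.

Lemma vXn x (m : nat) : x != 0 -> v (x ^+ m) = m%:Z * v x.
Proof.
move=> x0; elim: m => [|m IH]; first by rewrite expr0 v1 mul0r.
rewrite exprS vM ?expf_neq0 // IH; lia.
Qed.

Lemma vXz x (z : int) : x != 0 -> v (x ^ z) = z * v x.
Proof.
move=> x0; case: z => m; first by rewrite -exprnP vXn.
rewrite NegzE -exprnN vV ?expf_neq0 // vXn //; lia.
Qed.

Lemma vge0 m : vge v 0 m.
Proof. by left. Qed.

Lemma vge_le {x : K} {m m' : int} : vge v x m -> m' <= m -> vge v x m'.
Proof. case=> [->|h] le; [by left|right; lia]. Qed.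

Lemma vgeD {x y : K} {m : int} : vge v x m -> vge v y m -> vge v (x + y) m.
Proof.
case=> [->|hx]; first by rewrite add0r.
case=> [->|hy]; first by rewrite addr0; right.
have [x0|x0] := eqVneq x 0; first by rewrite x0 add0r; right.
have [y0|y0] := eqVneq y 0; first by rewrite y0 addr0; right.
have [s0|s0] := eqVneq (x + y) 0; first by left.
right; apply: le_trans (vD x0 y0 s0); by rewrite le_min hx hy.
Qed.

Lemma vgeN {x : K} {m : int} : vge v x m -> vge v (- x) m.
Proof. by case=> [->|h]; [left; rewrite oppr0|right; rewrite vN]. Qed.

Lemma vgeB {x y : K} {m : int} : vge v x m -> vge v y m -> vge v (x - y) m.
Proof. by move=> hx hy; apply: vgeD => //; apply: vgeN. Qed.

Lemma vgeM {x y : K} {a b : int} : vge v x a -> vge v y b -> vge v (x * y) (a + b).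
Proof.
case=> [->|hx]; first by rewrite mul0r; left.
case=> [->|hy]; first by rewrite mulr0; left.
have [x0|x0] := eqVneq x 0; first by rewrite x0 mul0r; left.
have [y0|y0] := eqVneq y 0; first by rewrite y0 mulr0; left.
right; rewrite vM //; lia.
Qed.

Lemma vge_sum (I : finType) (P : pred I) (F : I -> K) m :
  (forall j, P j -> vge v (F j) m) -> vge v (\sum_(j | P j) F j) m.
Proof.
move=> h; apply: (big_ind (fun x => vge v x m)); first by left.
  by move=> a b ha hb; apply: vgeD.
exact: h.
Qed.

Lemma vge_eq {x : K} : x != 0 -> vge v x (v x).
Proof. by right. Qed.

Lemma vD_lt {x y : K} : x != 0 -> y != 0 -> v x < v y -> x + y != 0 /\ v (x + y) = v x.
Proof.
move=> x0 y0 lt.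
have s0 : x + y != 0.
  apply/eqP=> e; have : y = - x by apply/eqP; rewrite -subr_eq0 opprK addrC e.
  by move=> ey; move: lt; rewrite ey vN ltxx.
split=> //.
have h1 := vD x0 y0 s0; rewrite ge_min in h1.
have ny0 : - y != 0 by rewrite oppr_eq0.
have := vD s0 ny0; rewrite addrK => h2; have := h2 x0; rewrite ge_min vN => h3.
move: h1 h3; case/orP=> h1; case/orP=> h3.
- by apply/le_anti; rewrite h3 h1.
- by move: lt; rewrite ltNge h3.
- by move: lt; rewrite ltNge (le_trans h1 h3).
- by move: lt; rewrite ltNge h3.
Qed.


Lemma n_gt0 : (0 < n)%N.
Proof. exact: adim_gt0. Qed.

Lemma in_kP (x : K) : in_k x -> exists c : k, x = c%:A.
Proof. by move/vlineP. Qed.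

Lemma in_k_alg (c : k) : in_k (c%:A : K).
Proof. by apply/vlineP; exists c. Qed.

Lemma vk_div {x : K} : in_k x -> x != 0 -> (n%:Z %| v x)%Z.
Proof. by case: Htr => h _; apply: h. Qed.

Lemma vk_up (x : K) (M j : int) : in_k x -> vge v x (n%:Z * M - j) -> 0 <= j -> j < n%:Z ->
  vge v x (n%:Z * M).
Proof.
move=> kx [->|h] j0 jn; first by left.
have [x0|x0] := eqVneq x 0; first by left.
right; have /dvdzP[q e] := vk_div kx x0; rewrite e in h *.
have : q <= M - 1 \/ M <= q by lia.
case=> hq; nia.
Qed.

Lemma pkP : exists pk, [/\ in_k pk, pk != 0 & v pk = n%:Z].
Proof. by case: Htr => _ [x [h1 h2 h3]]; exists x. Qed.

Lemma Trk_in (x : K) : in_k (Trk x).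
Proof. exact: mem_galTrace Hgal (memvf x). Qed.

Lemma Trk_scale (a x : K) : in_k a -> Trk (a * x) = a * Trk x.
Proof.
move=> ka; rewrite /Trk /galTrace mulr_sumr; apply: eq_bigr => s hs.
by rewrite rmorphM /= (fixed_gal (sub1v _) hs ka).
Qed.

Lemma TrkD (x y : K) : Trk (x + y) = Trk x + Trk y.
Proof. by rewrite /Trk raddfD. Qed.

Lemma gact_scale (f : KG K) (a x : K) : in_k a -> Defs.gact f (a * x) = a * Defs.gact f x.
Proof.
move=> ka; rewrite /Defs.gact mulr_sumr; apply: eq_bigr => s hs.
by rewrite rmorphM /= (fixed_gal (sub1v _) hs ka) mulrCA.
Qed.

Lemma gactD (f : KG K) (x y : K) : Defs.gact f (x + y) = Defs.gact f x + Defs.gact f y.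
Proof.
by rewrite /Defs.gact -big_split; apply: eq_bigr => s _; rewrite rmorphD mulrDr.
Qed.

Lemma gact_sum (f : KG K) (N : nat) (F : nat -> K) :
  Defs.gact f (\sum_(j < N) F j) = \sum_(j < N) Defs.gact f (F j).
Proof.
elim: N => [|N IH]; first by rewrite !big_ord0 /Defs.gact big1 // => s _; rewrite rmorph0 mulr0.
by rewrite !big_ord_recr /= gactD IH.
Qed.

Lemma Trk_sum (N : nat) (F : 'I_N -> K) : Trk (\sum_(j < N) F j) = \sum_(j < N) Trk (F j).
Proof. by rewrite /Trk raddf_sum. Qed.

Lemma Trk0 : Trk (0 : K) = 0.
Proof. by rewrite /Trk raddf0. Qed.

Lemma Tr_lemma (M : int) (z : K) : vge v z (- delta + n%:Z * M) -> vge v (Trk z) (n%:Z * M).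
Proof.
move=> hz; have [pk [kpk pk0 vpk]] := pkP.
set z' := pk ^ (- M) * z.
have ez : z = pk ^ M * z'.
  by rewrite /z' mulrA -invr_expz mulfV ?mul1r // expfz_neq0.
have hz' : vge v z' (- delta).
  have := vgeM (vge_eq (expfz_neq0 (- M) pk0)) hz.
  rewrite vXz // vpk => h; apply: vge_le h _; lia.
have := (Hdiff z').2 hz' 1 (or_intror _); rewrite v1 // mulr1 => /(_ (lexx _)) h.
rewrite ez Trk_scale; last exact: rpredXz.
have := vgeM (vge_eq (expfz_neq0 M pk0)) h.
rewrite vXz // vpk => h2; apply: vge_le h2 _; lia.
Qed.

Lemma alg_neq0 {c : k} : c != 0 -> (c%:A : K) != 0.
Proof. by move=> c0; rewrite scaler_eq0 negb_or c0 oner_neq0. Qed.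

Lemma vterm (c : k) (j : nat) : c != 0 -> v (c *: pi ^+ j) = v (c%:A) + j%:Z.
Proof.
move=> c0; rewrite -[c *: _]mulr_algl vM ?alg_neq0 ?expf_neq0 // vXn // vpi; lia.
Qed.

Lemma term_neq0 {c : k} (j : nat) : c != 0 -> c *: pi ^+ j != 0.
Proof. by move=> c0; rewrite scaler_eq0 negb_or c0 expf_neq0. Qed.

Lemma vterm_dist (c c' : k) (j l : nat) : c != 0 -> c' != 0 -> (j < n)%N -> (l < n)%N ->
  j != l -> v (c *: pi ^+ j) != v (c' *: pi ^+ l).
Proof.
move=> c0 c'0 jn ln jl; rewrite !vterm //.
have /dvdzP[q eq] := vk_div (in_k_alg c) (alg_neq0 c0).
have /dvdzP[q' eq'] := vk_div (in_k_alg c') (alg_neq0 c'0).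
rewrite eq eq'; apply/negP => /eqP e; move/negP: jl; apply; apply/eqP.
have : q - q' = 0 \/ 1 <= q - q' \/ q - q' <= -1 by lia.
case=> [h|[h|h]]; nia.
Qed.

Lemma key_val (a : nat -> k) (N : nat) : (N <= n)%N ->
  let S := \sum_(j < N) a j *: pi ^+ j in
  (S = 0 /\ forall j, (j < N)%N -> a j = 0) \/
  [/\ S != 0, forall l, (l < N)%N -> a l != 0 -> v S <= v (a l *: pi ^+ l)
   & exists2 j, (j < N)%N & a j != 0 /\ v S = v (a j *: pi ^+ j)].
Proof.
elim: N => [|N IH] Nn /=.
  by left; rewrite big_ord0; split.
have Nn' : (N <= n)%N by apply: ltnW.
rewrite big_ord_recr /=.
have [aN|aN] := eqVneq (a N) 0.
  rewrite aN scale0r addr0.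
  case: (IH Nn') => [[S0 hS]|[S0 hS [j jN hj]]]; [left|right]; split => //.
    by move=> j; rewrite ltnS leq_eqVlt => /orP[/eqP ->|/hS].
    move=> l; rewrite ltnS leq_eqVlt => /orP[/eqP ->|/hS //]; by rewrite aN eqxx.
  by exists j => //; apply: ltnW.
have t0 : a N *: pi ^+ N != 0 by apply: term_neq0.
case: (IH Nn') => [[S0 hS]|[S0 hS [j jN [aj ej]]]]; right.
  rewrite S0 add0r; split=> //; last by exists N.
  by move=> l; rewrite ltnS leq_eqVlt => /orP[/eqP ->|/hS ->] //; rewrite eqxx.
have dj : v (a j *: pi ^+ j) != v (a N *: pi ^+ N).
  by apply: vterm_dist => //; [apply: ltn_trans Nn|rewrite ltn_eqF].
rewrite -ej in dj.
case: (ltgtP (v (\sum_(i < N) a i *: pi ^+ i)) (v (a N *: pi ^+ N))) => [lt|lt|eq].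
- have [s0 es] := vD_lt S0 t0 lt.
  split=> //; last by exists j => //; [apply: ltnW|rewrite es].
  move=> l; rewrite ltnS leq_eqVlt => /orP[/eqP ->|lN al]; first by rewrite es (ltW lt).
  by rewrite es; apply: hS.
- have [s0 es] := vD_lt t0 S0 lt; rewrite addrC in s0 es.
  split=> //; last by exists N; rewrite ?es.
  move=> l; rewrite ltnS leq_eqVlt => /orP[/eqP ->|lN al]; first by rewrite es.
  by rewrite es; apply: le_trans (ltW lt) (hS l lN al).
- by rewrite eq eqxx in dj.
Qed.

Definition Bpi := [tuple pi ^+ j | j < n].

Lemma Bpi_nth (i : 'I_n) : Bpi`_i = pi ^+ i.
Proof. by rewrite -tnth_nth tnth_mktuple. Qed.

Definition ext (kk : 'I_n -> k) (j : nat) : k :=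
  if insub j is Some i then kk i else 0.

Lemma ext_val kk (i : 'I_n) : ext kk i = kk i.
Proof. by rewrite /ext valK. Qed.

Lemma sum_ext kk : \sum_(i < n) kk i *: Bpi`_i = \sum_(j < n) ext kk j *: pi ^+ j.
Proof. by apply: eq_bigr => i _; rewrite ext_val Bpi_nth. Qed.

Lemma Bpi_free : free Bpi.
Proof.
apply/freeP => kk; rewrite sum_ext => h i.
case: (@key_val (ext kk) n (leqnn n)) => /= [[_ hS]|[S0 _ _]].
  by rewrite -ext_val; apply: hS.
by rewrite h eqxx in S0.
Qed.

Lemma Bpi_basis : basis_of fullv Bpi.
Proof. by rewrite basisEfree Bpi_free subvf size_tuple leqnn. Qed.

Lemma decomp (x : K) : exists a : nat -> k, x = \sum_(j < n) a j *: pi ^+ j.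
Proof.
exists (ext (fun i => coord Bpi i x)); rewrite -sum_ext.
exact: coord_basis Bpi_basis (memvf x).
Qed.

Lemma decomp_val {x : K} {a : nat -> k} : x != 0 -> x = \sum_(j < n) a j *: pi ^+ j ->
  forall j, (j < n)%N -> vge v (a j *: pi ^+ j) (v x).
Proof.
move=> x0 ex j jn.
have [aj|aj] := eqVneq (a j) 0; first by left; rewrite aj scale0r.
right; rewrite ex.
case: (@key_val a n (leqnn n)) => /= [[S0 _]|[_ hS _]]; last exact: hS.
by move: x0; rewrite ex S0 eqxx.
Qed.

Local Notation dd := (delta - (n%:Z) + 1).
Local Notation cc := (Trk (pi ^ (- dd))).

Lemma vge_piz (z : int) : vge v (pi ^ z) z.
Proof. by right; rewrite vXz // vpi mulr1. Qed.

Lemma n_ge1 : 1 <= n%:Z.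
Proof. have := n_gt0; lia. Qed.

Lemma Tr_piz (j M : int) : - dd + j >= - delta + n%:Z * M -> vge v (Trk (pi ^ (- dd + j))) (n%:Z * M).
Proof. by move=> h; apply: Tr_lemma; apply: vge_le (vge_piz _) h. Qed.

Lemma cc_int : vge v cc 0.
Proof.
have := @Tr_piz 0 0; rewrite addr0 mulr0; apply.
have := n_ge1; lia.
Qed.

Lemma coef_int (c : k) (j : nat) : (j < n)%N -> vge v (c *: pi ^+ j) 0 -> vge v (c%:A) 0.
Proof.
move=> jn h; have [->|c0] := eqVneq c 0; first by left; rewrite scale0r.
have := @vk_up _ 0 j (in_k_alg c); rewrite mulr0; apply; last by lia.
  case: h => [e|h]; first by move: (term_neq0 j c0); rewrite e eqxx.
  by right; move: h; rewrite vterm //; lia.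
lia.
Qed.

Lemma cc_unit : ~ vge v cc 1.
Proof.
move=> hc.
have hcn : vge v cc n%:Z.
  have := @vk_up cc 1 (n%:Z - 1) (Trk_in _); rewrite mulr1; apply.
  - by apply: vge_le hc _; lia.
  - have := n_ge1; lia.
  - lia.
have [pk [kpk pk0 vpk]] := pkP.
set x0 := pk^-1 * pi ^ (- dd).
have x00 : x0 != 0 by rewrite mulf_neq0 ?invr_neq0 ?expfz_neq0.
have vx0 : v x0 = - delta - 1.
  rewrite vM ?invr_neq0 ?expfz_neq0 // vV // vXz // vpi vpk; lia.
suff /(Hdiff x0).1 : forall y, vge v y 0 -> vge v (Trk (x0 * y)) 0.
  case=> [e|]; first by rewrite e eqxx in x00.
  rewrite vx0; lia.
move=> y hy; have [->|y0] := eqVneq y 0; first by rewrite mulr0 Trk0; left.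
have [a ea] := decomp y.
have hv := decomp_val y0 ea.
rewrite ea mulr_sumr Trk_sum; apply: vge_sum => j _.
have e1 : x0 * (a j *: pi ^+ j) = (pk^-1 * (a j)%:A) * pi ^ (- dd + j).
  rewrite -[a j *: _]mulr_algl /x0 expfzDr // -exprnP; ring.
rewrite e1 Trk_scale; last by rewrite /in_k rpredM ?rpredV ?in_k_alg.
have haj : vge v ((a j)%:A) 0.
  by apply: (@coef_int (a j) j (ltn_ord j)); apply: vge_le (hv j (ltn_ord j)) _; case: hy => [e|//]; rewrite e eqxx in y0.
have hT : vge v (Trk (pi ^ (- dd + j))) (n%:Z * 1).
  case: (posnP j) => [j0|jp].
    by rewrite j0 addr0 mulr1.
  apply: Tr_piz; lia.
have hpk : vge v (pk^-1) (- n%:Z) by right; rewrite vV // vpk.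
have := vgeM (vgeM hpk haj) hT; rewrite mulr1 => h; apply: vge_le h _; lia.
Qed.

Lemma Tr_bound (l : nat) (y : K) : (l < n)%N -> y != 0 ->
  vge v (pi ^+ l * Trk (pi ^ (- dd - l%:Z) * y)) (v y).
Proof.
move=> ln y0.
have n0 : (n%:Z != 0) by have := n_ge1; lia.
have np : (0 < n%:Z) by have := n_ge1; lia.
have e := divz_eq (v y) n%:Z.
have t0 := modz_ge0 (v y) n0.
have tn := ltz_pmod (v y) np.
set m := ((v y) %/ n%:Z)%Z in e; set t := ((v y) %% n%:Z)%Z in e t0 tn.
have hz : vge v (pi ^ (- dd - l%:Z) * y) (- dd - l%:Z + v y).
  exact: vgeM (vge_piz _) (vge_eq y0).
have hpl : vge v (pi ^+ l) l%:Z by rewrite exprnP; apply: vge_piz.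
have [tl|tl] := lerP t l%:Z.
  have h1 : vge v (Trk (pi ^ (- dd - l%:Z) * y)) (n%:Z * m).
    apply: Tr_lemma; apply: vge_le hz _; rewrite e; nia.
  have := vgeM hpl h1 => h; apply: vge_le h _; rewrite e; nia.
have h1 : vge v (Trk (pi ^ (- dd - l%:Z) * y)) (n%:Z * (m + 1)).
  apply: Tr_lemma; apply: vge_le hz _; rewrite e; nia.
have := vgeM hpl h1 => h; apply: vge_le h _; rewrite e; nia.
Qed.

Variables (kbar : fieldType) (r : K -> kbar) (i : int).
Hypothesis Hr : residue_map v r.

Lemma rD {x y : K} : vge v x 0 -> vge v y 0 -> r (x + y) = r x + r y.
Proof. by case: Hr => _ h _ _ _; apply: h. Qed.

Lemma rM {x y : K} : vge v x 0 -> vge v y 0 -> r (x * y) = r x * r y.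
Proof. by case: Hr => _ _ h _ _; apply: h. Qed.

Lemma r0P {x : K} : vge v x 0 -> (r x = 0 <-> vge v x 1).
Proof. by case: Hr => _ _ _ _ h; apply: h. Qed.

Lemma rsurj (c : kbar) : exists x, vge v x 0 /\ r x = c.
Proof. by case: Hr => _ _ _ h _; apply: h. Qed.

Lemma r0 : r 0 = 0.
Proof. by apply: (proj2 (r0P (vge0 0))); left. Qed.

Lemma rcc0 : r cc != 0.
Proof. by apply/eqP => /(r0P cc_int) /cc_unit. Qed.

Definition cf (f : KG K) (j : nat) : kbar := r (Defs.gact f (pi ^ (j%:Z - i)) / pi ^+ j).

Lemma p_def f : p_map v r pi delta i f = (r cc)^-1 *: \poly_(j < n) cf f j.
Proof. by rewrite /p_map /= poly_def. Qed.

Lemma vge_invpj (j : nat) : vge v ((pi ^+ j)^-1) (- j%:Z).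
Proof. by right; rewrite vV ?expf_neq0 // vXn // vpi mulr1. Qed.

Lemma Cfil_coef {m : int} {f : KG K} (j : nat) : Cfil v m f ->
  vge v (Defs.gact f (pi ^ (j%:Z - i)) / pi ^+ j) (m - i).
Proof.
move=> h; have := h _ (expfz_neq0 (j%:Z - i) pi0).
rewrite vXz // vpi mulr1 => h1.
have := vgeM h1 (vge_invpj j) => h2; apply: vge_le h2 _; lia.
Qed.

Lemma cf_int {f : KG K} (j : nat) : Cfil v i f -> vge v (Defs.gact f (pi ^ (j%:Z - i)) / pi ^+ j) 0.
Proof. by move=> h; have := Cfil_coef j h; rewrite subrr. Qed.

Lemma part1 (f : KG K) : Cfil v (i + 1) f -> Cfil v i f /\ p_map v r pi delta i f = 0.
Proof.
move=> h; have hi : Cfil v i f by move=> x x0; apply: vge_le (h x x0) _; lia.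
split=> //.
rewrite p_def; apply/eqP; rewrite scaler_eq0; apply/orP; right.
apply/eqP/polyP => m; rewrite coef_poly coef0; case: ifP => // _.
apply/(r0P (cf_int m hi)).
by have := Cfil_coef m h; rewrite addrAC subrr add0r.
Qed.

Lemma gact_kadd (f g : KG K) (x : K) : Defs.gact (kadd f g) x = Defs.gact f x + Defs.gact g x.
Proof.
by rewrite /Defs.gact -big_split; apply: eq_bigr => s _; rewrite /kadd ffunE mulrDl.
Qed.

Lemma gact_kscale (a : K) (f : KG K) (x : K) : Defs.gact (kscale a f) x = a * Defs.gact f x.
Proof.
by rewrite /Defs.gact mulr_sumr; apply: eq_bigr => s _; rewrite /kscale ffunE mulrA.
Qed.

Lemma part2 (f g : KG K) : Cfil v i f -> Cfil v i g ->
  p_map v r pi delta i (kadd f g) = p_map v r pi delta i f + p_map v r pi delta i g.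
Proof.
move=> hf hg; rewrite !p_def -scalerDr; congr (_ *: _).
apply/polyP => m; rewrite coefD !coef_poly; case: ifP => _; last by rewrite addr0.
by rewrite /cf gact_kadd mulrDl rD //; apply: cf_int.
Qed.

Lemma part3 (a : K) (f : KG K) : vge v a 0 -> Cfil v i f ->
  p_map v r pi delta i (kscale a f) = r a *: p_map v r pi delta i f.
Proof.
move=> ha hf; rewrite !p_def scalerA mulrC -scalerA; congr (_ *: _).
apply/polyP => m; rewrite coefZ !coef_poly; case: ifP => _; last by rewrite mulr0.
by rewrite /cf gact_kscale -mulrA rM //; apply: cf_int.
Qed.

Lemma coef_ge {c : k} {j : nat} {m : int} : vge v (c *: pi ^+ j) m -> vge v (c%:A) (m - j%:Z).
Proof.
have [->|c0] := eqVneq c 0; first by left; rewrite scale0r.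
case=> [e|h]; first by move: (term_neq0 j c0); rewrite e eqxx.
by right; move: h; rewrite vterm //; lia.
Qed.

Lemma part4 (f : KG K) : Cfil v i f -> eqR K (p_map v r pi delta i f) 0 -> Cfil v (i + 1) f.
Proof.
move=> hf; rewrite /eqR subr0 => hd.
have pf0 : p_map v r pi delta i f = 0.
  apply/eqP; apply: contraT => nz; have := dvdp_leq nz hd; rewrite size_Xn_sub_1 ?n_gt0 //.
  have : (size (p_map v r pi delta i f) <= n)%N.
    by rewrite p_def; apply: leq_trans (size_scale_leq _ _) (size_poly _ _).
  move=> h1 h2; have := leq_trans h2 h1; by rewrite ltnn.
have hc : forall j, (j < n)%N -> cf f j = 0.
  move: pf0; rewrite p_def => /eqP; rewrite scaler_eq0 invr_eq0 (negbTE rcc0) /=.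
  by move=> /eqP/polyP h j jn; have := h j; rewrite coef_poly jn coef0.
have hj : forall j, (j < n)%N -> vge v (Defs.gact f (pi ^ (j%:Z - i))) (j%:Z + 1).
  move=> j jn; have h := (r0P (cf_int j hf)).1 (hc j jn).
  have e : Defs.gact f (pi ^ (j%:Z - i)) = (Defs.gact f (pi ^ (j%:Z - i)) / pi ^+ j) * pi ^+ j.
    by rewrite divfK ?expf_neq0.
  rewrite e; have hp : vge v (pi ^+ j) j%:Z by rewrite exprnP; apply: vge_piz.
  by have := vgeM h hp => h'; apply: vge_le h' _; lia.
move=> x x0.
set y := x * pi ^ i.
have y0 : y != 0 by rewrite mulf_neq0 ?expfz_neq0.
have vy : v y = v x + i by rewrite /y vM ?expfz_neq0 // vXz // vpi mulr1.
have [a ea] := decomp y.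
have ex : x = \sum_(j < n) (a j)%:A * pi ^ (j%:Z - i).
  have -> : x = y * pi ^ (- i) by rewrite /y -mulrA -expfzDr // subrr expr0z mulr1.
  rewrite ea mulr_suml; apply: eq_bigr => j _.
  by rewrite -[a j *: _]mulr_algl -mulrA exprnP -expfzDr.
rewrite {1}ex (gact_sum f n (fun j : nat => (a j)%:A * pi ^ (j%:Z - i))); apply: vge_sum => j _; rewrite gact_scale ?in_k_alg //.
have ha := coef_ge (decomp_val y0 ea j (ltn_ord j) : vge v (a j *: pi ^+ j) (v y)).
have := vgeM ha (hj j (ltn_ord j)); rewrite vy => h; apply: vge_le h _; lia.
exact: in_k_alg.
Qed.

Lemma term_ge1 (m l : nat) : (m < n)%N -> (l < n)%N -> l != m ->
  vge v (pi ^ (l%:Z - m%:Z) * Trk (pi ^ (- dd + (m%:Z - l%:Z)))) 1.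
Proof.
move=> mn ln lm.
have [lt|gt] := ltnP l m.
  have h : vge v (Trk (pi ^ (- dd + (m%:Z - l%:Z)))) (n%:Z * 1).
    by apply: Tr_piz; lia.
  have := vgeM (vge_piz (l%:Z - m%:Z)) h => h'; apply: vge_le h' _; lia.
have h : vge v (Trk (pi ^ (- dd + (m%:Z - l%:Z)))) (n%:Z * 0).
  by apply: Tr_piz; lia.
have := vgeM (vge_piz (l%:Z - m%:Z)) h => h'; apply: vge_le h' _.
have : (m < l)%N by rewrite ltn_neqAle eq_sym lm gt.
lia.
Qed.

Lemma part5 (q : {poly kbar}) : exists f, Cfil v i f /\ eqR K (p_map v r pi delta i f) q.
Proof.
set D : {poly kbar} := 'X^n - 1.
have sD : size D = n.+1 by rewrite /D size_Xn_sub_1 // n_gt0.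
have D0 : D != 0 by rewrite -size_poly_eq0 sD.
set q' := q %% D.
have sq : (size q' <= n)%N by have := ltn_modp q D; rewrite D0 sD ltnS.
have [b hb] := fin_all_exists (fun j : 'I_n => rsurj (q'`_j)).
set f : KG K := [ffun s : gal_of (@fullv k K) => \sum_(l < n) b l * pi ^+ l * s (pi ^ (- dd - l%:Z + i))].
have gf : forall x, Defs.gact f x = \sum_(l < n) b l * pi ^+ l * Trk (pi ^ (- dd - l%:Z + i) * x).
  move=> x; rewrite /Defs.gact.
  under eq_bigr => s _ do rewrite ffunE mulr_suml.
  rewrite exchange_big /=; apply: eq_bigr => l _.
  rewrite /Trk /galTrace mulr_sumr; apply: eq_bigr => s _.
  by rewrite rmorphM mulrA.
exists f; split.
  move=> x x0; rewrite gf; apply: vge_sum => l _.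
  set y := pi ^ i * x.
  have y0 : y != 0 by rewrite mulf_neq0 ?expfz_neq0.
  have vy : v y = i + v x by rewrite /y vM ?expfz_neq0 // vXz // vpi mulr1.
  have e : pi ^ (- dd - l%:Z + i) * x = pi ^ (- dd - l%:Z) * y by rewrite /y mulrA -expfzDr.
  rewrite e -mulrA.
  have := vgeM (hb l).1 (@Tr_bound l y (ltn_ord l) y0); rewrite vy => h; apply: vge_le h _; lia.
suff -> : p_map v r pi delta i f = q'.
  rewrite /eqR {1}(divp_eq q D) opprD addrA addrAC -/q' subrr sub0r dvdpNr.
  by apply: dvdp_mull; apply: dvdpp.
rewrite p_def; apply/polyP => m; rewrite coefZ coef_poly; case: ifP => mn; last first.
  by rewrite mulr0 nth_default // (leq_trans sq) // leqNgt mn.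
suff -> : cf f m = r cc * q'`_m by rewrite mulKf // rcc0.
have e1 : Defs.gact f (pi ^ (m%:Z - i)) / pi ^+ m =
    \sum_(l < n) b l * (pi ^ (l%:Z - m%:Z) * Trk (pi ^ (- dd + (m%:Z - l%:Z)))).
  rewrite gf mulr_suml; apply: eq_bigr => l _.
  have e2 : pi ^ (- dd - l%:Z + i) * pi ^ (m%:Z - i) = pi ^ (- dd + (m%:Z - l%:Z)).
    rewrite -expfzDr //; congr (_ ^ _); lia.
  have e3 : pi ^+ l / pi ^+ m = pi ^ (l%:Z - m%:Z).
    by rewrite !exprnP invr_expz -expfzDr.
  rewrite e2 -e3; ring.
rewrite /cf e1 (bigD1 (Ordinal mn)) //= subrr expr0z addr0 mul1r.
have hrest : vge v (\sum_(l < n | l != Ordinal mn) b l * (pi ^ (l%:Z - m%:Z) * Trk (pi ^ (- dd + (m%:Z - l%:Z))))) 1.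
  apply: vge_sum => l lm.
  have lm' : (l : nat) != m by exact: lm.
  have := vgeM (hb l).1 (@term_ge1 m l mn (ltn_ord l) lm'); rewrite add0r.
  by [].
have [hbm rbm] := hb (Ordinal mn).
rewrite rD; last 2 first.
- by have := vgeM hbm cc_int; rewrite addr0.
- by apply: vge_le hrest _.
rewrite (proj2 (r0P (vge_le hrest ler01)) hrest) addr0 (rM hbm cc_int) mulrC; congr (_ * _); exact: rbm.
Qed.

End Main.

Theorem lemma2p1p2 (k : fieldType) (K : splittingFieldType k)
  (v : K -> int) (kbar : fieldType) (r : K -> kbar) (pi : K) (delta : int) (i : int) :
  is_dvf v ->
  vcomplete v (fun _ => True) ->
  vcomplete v (@in_k k K) ->
  galois 1%VS {:K} ->
  totally_ramified v ->
  residue_map v r ->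
  pi != 0 -> v pi = 1 ->
  is_vdiff v delta ->
  let p := p_map v r pi delta i in
  [/\ (* well defined: C_(i+1) ⊂ C_i maps to 0 *)
      (forall f, Cfil v (i + 1) f -> Cfil v i f /\ eqR K (p f) 0),
      (* additive *)
      (forall f g, Cfil v i f -> Cfil v i g -> eqR K (p (kadd f g)) (p f + p g)),
      (* kbar-linear: O_K acts on C_i/C_(i+1) through r *)
      (forall a f, vge v a 0 -> Cfil v i f -> eqR K (p (kscale a f)) (r a *: p f)),
      (* injective on C_i / C_(i+1) *)
      (forall f, Cfil v i f -> eqR K (p f) 0 -> Cfil v (i + 1) f)
    & (* surjective onto R *)
      (forall q : {poly kbar}, exists f, Cfil v i f /\ eqR K (p f) q)].
Proof.
move=> Hv _ _ Hgal Htr Hr pi0 vpi Hdiff p.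
split.
- move=> f hf; have [h1 h2] : Cfil v i f /\ p f = 0 by exact: (@part1 k K v pi delta Hv Hgal pi0 vpi kbar r i Hr).
  by split=> //; rewrite /eqR h2 subrr dvdp0.
- move=> f g hf hg.
  have -> : p (kadd f g) = p f + p g by exact: (@part2 k K v pi delta Hv Hgal pi0 vpi kbar r i Hr).
  by rewrite /eqR subrr dvdp0.
- move=> a f ha hf.
  have -> : p (kscale a f) = r a *: p f by exact: (@part3 k K v pi delta Hv Hgal pi0 vpi kbar r i Hr).
  by rewrite /eqR subrr dvdp0.
- by move=> f hf hp0; apply: (@part4 k K v pi delta Hv Hgal Htr pi0 vpi Hdiff kbar r i Hr).
- by move=> q; apply: (@part5 k K v pi delta Hv Hgal Htr pi0 vpi Hdiff kbar r i Hr).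
Qed.
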